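(* Let $n_j:=2^{2^j}$ and $t_n:=1/n$. For $j\ge100$, $f_{n_j}(t_{n_j})=0$ and $B_{n_j}(f_{n_j},t_{n_j})\ge\frac{\ln n_j}{16\,n_j}$.
   Context: Nodes: $x_{k,n}:=2k/n-1$, $k=0,\dots,n$. $B_n(f,x):=N_n(f,x)/D_n(x)$ for $x$ not a node, $B_n(f,x_{k,n}):=f(x_{k,n})$, with $N_n(f,x)=\sum_{k=0}^n(-1)^k\frac{f(x_{k,n})}{x-x_{k,n}}$, $D_n(x)=\sum_{k=0}^n(-1)^k\frac{1}{x-x_{k,n}}$. For $m$ such that $\sqrt m$ is an integer multiple of $4$, define $f_m:\mathbb{R}\to\mathbb{R}$ by: $f_m(x)=0$ for $x<1/m$ or $x\ge(\sqrt m-3)/m$; $f_m(x)=x-1/m$ for $1/m\le x<2/m$; $f_m(x)=\frac{4p+3}{m}-x$ for $0\le p\le\frac{\sqrt m-8}{4}$ and $\frac{4p+2}{m}\le x<\frac{4p+4}{m}$; $f_m(x)=x-\frac{4p+1}{m}$ for $1\le p\le\frac{\sqrt m-8}{4}$ and $\frac{4p}{m}\le x<\frac{4p+2}{m}$; $f_m(x)=x-\frac{\sqrt m-3}{m}$ for $\frac{\sqrt m-4}{m}\le x<\frac{\sqrt m-3}{m}$. *)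

(* Defs.v *)
From Stdlib Require Import Reals Lra Classical ClassicalEpsilon.
Open Scope R_scope.

Definition node (n k : nat) : R := 2 * INR k / INR n - 1.

Definition Nn (n : nat) (f : R -> R) (x : R) : R :=
  sum_f_R0 (fun k => (-1) ^ k * f (node n k) / (x - node n k)) n.

Definition Dn (n : nat) (x : R) : R :=
  sum_f_R0 (fun k => (-1) ^ k / (x - node n k)) n.

Definition is_node (n : nat) (x : R) : Prop :=
  exists k : nat, (k <= n)%nat /\ x = node n k.

Definition B (n : nat) (f : R -> R) (x : R) : R :=
  match excluded_middle_informative (is_node n x) with
  | left H => f (node n (proj1_sig (constructive_indefinite_description _ H)))
  | right _ => Nn n f x / Dn n x
  end.

Definition desc_piece (m : nat) (x : R) (p : nat) : Prop :=
  INR p <= (sqrt (INR m) - 8) / 4 /\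
  (4 * INR p + 2) / INR m <= x < (4 * INR p + 4) / INR m.

Definition asc_piece (m : nat) (x : R) (p : nat) : Prop :=
  (1 <= p)%nat /\ INR p <= (sqrt (INR m) - 8) / 4 /\
  (4 * INR p) / INR m <= x < (4 * INR p + 2) / INR m.

(* The function f_m of the paper (meant for m with sqrt m a multiple of 4). *)
Definition fm (m : nat) (x : R) : R :=
  let M := INR m in
  let s := sqrt M in
  if Rlt_dec x (1 / M) then 0
  else if Rle_dec ((s - 3) / M) x then 0
  else if Rlt_dec x (2 / M) then x - 1 / M
  else if Rle_dec ((s - 4) / M) x then x - (s - 3) / M
  else match excluded_middle_informative (exists p, desc_piece m x p) with
       | left H =>
           let p := proj1_sig (constructive_indefinite_description _ H) in
           (4 * INR p + 3) / M - x
       | right _ =>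
         match excluded_middle_informative (exists p, asc_piece m x p) with
         | left H =>
             let p := proj1_sig (constructive_indefinite_description _ H) in
             x - (4 * INR p + 1) / M
         | right _ => 0
         end
       end.

(* Main.v *)
Require Import Defs.
From Stdlib Require Import Reals Lra Lia Classical ClassicalEpsilon.
Open Scope R_scope.

Lemma ln_le' x y : 0 < x -> x <= y -> ln x <= ln y.
Proof. intros Hx Hxy; destruct (Rle_lt_or_eq_dec _ _ Hxy) as [H|H].
  - left; apply ln_increasing; auto.
  - subst; lra. Qed.

Lemma ln_le_xm1 y : 0 < y -> ln y <= y - 1.
Proof. intros Hy. rewrite <- (ln_exp (y-1)). apply ln_le'; auto.
  pose proof (exp_ineq1_le (y-1)); lra. Qed.

Lemma pow_m1_sq m : (-1)^m * (-1)^m = 1.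
Proof. rewrite <- pow_add. replace (m+m)%nat with (2*m)%nat by lia. apply pow_1_even. Qed.

Lemma pow_m1_cases m : (-1)^m = 1 \/ (-1)^m = -1.
Proof. destruct (Nat.Even_or_Odd m) as [[p Hp]|[p Hp]]; subst.
  - left; apply pow_1_even.
  - right; replace (2*p+1)%nat with (S (2*p)) by lia; apply pow_1_odd. Qed.

Lemma alt_inc (a : nat -> R) m :
  (forall k, (k < m)%nat -> a k <= a (S k)) -> 0 <= a 0%nat ->
  0 <= (-1)^m * sum_f_R0 (fun k => (-1)^k * a k) m <= a m.
Proof.
  induction m; intros Hinc H0.
  - simpl. lra.
  - assert (IH : 0 <= (-1)^m * sum_f_R0 (fun k => (-1)^k * a k) m <= a m).
    { apply IHm; auto. }
    assert (Hm := Hinc m (Nat.lt_succ_diag_r m)).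
    cbn [sum_f_R0]. set (S0 := sum_f_R0 _ m) in *.
    cbn [pow]. set (e := (-1)^m) in *.
    assert (Hee : e * e = 1) by apply pow_m1_sq.
    replace (-1 * e * (S0 + -1 * e * a (S m))) with (- (e * S0) + (e*e) * a (S m)) by ring.
    rewrite Hee. lra.
Qed.

Lemma alt_dec (b : nat -> R) lo hi m :
  (forall k, 0 <= b (S k) <= b k) -> lo <= b 0%nat <= hi -> lo <= b 0%nat - b 1%nat <= hi ->
  lo <= sum_f_R0 (fun k => (-1)^k * b k) m <= hi /\
  lo <= sum_f_R0 (fun k => (-1)^k * b k) m - (-1)^m * b (S m) <= hi.
Proof.
  intros Hb H0 H1. induction m.
  - simpl. lra.
  - destruct IHm as [IH1 IH2].
    cbn [sum_f_R0]. set (S0 := sum_f_R0 _ m) in *.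
    cbn [pow]. pose proof (Hb (S m)). pose proof (Hb m).
    destruct (pow_m1_cases m) as [E|E]; rewrite E in *; split; lra.
Qed.

Lemma harm (u : nat -> R) K m :
  (forall l, (l <= m)%nat -> (l < K)%nat -> u l >= 1 / (2 * INR l + 1)) ->
  (forall l, (l <= m)%nat -> 0 <= u l) ->
  sum_f_R0 u m >= 1/2 * ln (INR (Nat.min (S m) K) + 1).
Proof.
  induction m; intros H1 H2.
  - simpl. destruct K as [|K].
    + simpl. rewrite Rplus_0_l, ln_1. pose proof (H2 0%nat (le_n _)). lra.
    + simpl. pose proof (H1 0%nat (le_n _) ltac:(lia)). simpl in H.
      assert (ln (1+1) <= 1) by (pose proof (ln_le_xm1 (1+1)); lra). lra.
  - cbn [sum_f_R0].
    assert (IH : sum_f_R0 u m >= 1/2 * ln (INR (Nat.min (S m) K) + 1)).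
    { apply IHm; intros; [apply H1|apply H2]; lia. }
    destruct (Nat.lt_ge_cases (S m) K) as [HK|HK].
    + rewrite Nat.min_l in IH by lia. rewrite Nat.min_l by lia.
      pose proof (H1 (S m) (le_n _) HK).
      rewrite !S_INR in *. set (x := INR m) in *.
      assert (0 <= x) by apply pos_INR.
      assert (Hl : ln (x+1+1+1) - ln (x+1+1) <= 1/(x+1+1)).
      { replace (x+1+1+1) with ((x+1+1) * ((x+1+1+1)/(x+1+1))) by (field; lra).
        rewrite ln_mult by (try apply Rdiv_lt_0_compat; lra).
        pose proof (ln_le_xm1 ((x+1+1+1)/(x+1+1)) ltac:(apply Rdiv_lt_0_compat; lra)).
        replace ((x+1+1+1)/(x+1+1) - 1) with (1/(x+1+1)) in H3 by (field; lra). lra. }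
      assert (1/(2*(x+1)+1) >= 1/2 * (1/(x+1+1))).
      { apply Rle_ge. unfold Rdiv. rewrite !Rmult_1_l.
        replace (/2 * / (x+1+1)) with (/(2*(x+1+1))) by (field; lra).
        apply Rinv_le_contravar; lra. }
      lra.
    + rewrite Nat.min_r in IH by lia. rewrite Nat.min_r by lia.
      pose proof (H2 (S m) (le_n _)). lra.
Qed.

Ltac inr := repeat progress (rewrite ?plus_INR, ?mult_INR, ?S_INR, ?INR_0 in *).

Lemma div_le_iff M x y : 0 < M -> (x / M <= y / M <-> x <= y).
Proof. intros HM; unfold Rdiv; split; intro H.
  - apply Rmult_le_reg_r with (/M); auto. apply Rinv_0_lt_compat; auto.
  - apply Rmult_le_compat_r; auto. left; apply Rinv_0_lt_compat; auto. Qed.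

Lemma div_lt_iff M x y : 0 < M -> (x / M < y / M <-> x < y).
Proof. intros HM; unfold Rdiv; split; intro H.
  - apply Rmult_lt_reg_r with (/M); auto. apply Rinv_0_lt_compat; auto.
  - apply Rmult_lt_compat_r; auto. apply Rinv_0_lt_compat; auto. Qed.

Lemma INR16 a : INR (16*a*a) = 16 * INR a * INR a.
Proof. rewrite !mult_INR. simpl. lra. Qed.

Lemma sqrt16 a : sqrt (INR (16*a*a)) = 4 * INR a.
Proof. rewrite INR16. replace (16 * INR a * INR a) with ((4*INR a)*(4*INR a)) by ring.
  apply sqrt_square. pose proof (pos_INR a); lra. Qed.

Lemma fm_left a x : (2 <= a)%nat -> x < 1 / INR (16*a*a) -> fm (16*a*a) x = 0.
Proof. intros _ H. unfold fm. cbv zeta. destruct (Rlt_dec _ _); [reflexivity|contradiction]. Qed.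

Lemma fm_right a i x : (2 <= a)%nat -> (2*a - 1 <= i)%nat -> x = 2 * INR i / INR (16*a*a) ->
  fm (16*a*a) x = 0.
Proof. intros Ha Hi Hx. unfold fm. cbv zeta. rewrite sqrt16.
  assert (HA : 2 <= INR a) by (apply le_INR in Ha; simpl in Ha; lra).
  assert (HM : 0 < INR (16*a*a)) by (rewrite INR16; nra).
  assert (HI : 2 * INR a - 1 <= INR i).
  { assert (H: (2*a <= i+1)%nat) by lia. apply le_INR in H. inr. lra. }
  destruct (Rlt_dec _ _); [reflexivity|].
  destruct (Rle_dec _ _); [reflexivity|].
  exfalso. apply n0. rewrite Hx. apply div_le_iff; auto. lra.
Qed.

Lemma fm_mid a i x : (2 <= a)%nat -> (1 <= i)%nat -> (i <= 2*a - 2)%nat ->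
  x = 2 * INR i / INR (16*a*a) ->
  fm (16*a*a) x = (-1)^(S i) / INR (16*a*a).
Proof. intros Ha Hi1 Hi2 Hx. unfold fm. cbv zeta. rewrite sqrt16.
  assert (HA : 2 <= INR a) by (apply le_INR in Ha; simpl in Ha; lra).
  assert (HM : 0 < INR (16*a*a)) by (rewrite INR16; nra).
  set (M := INR (16*a*a)) in *. set (A := INR a) in *.
  assert (HI1 : 1 <= INR i) by (apply le_INR in Hi1; simpl in Hi1; lra).
  assert (HI2 : INR i + 2 <= 2 * A).
  { assert (H: (i + 2 <= 2*a)%nat) by lia. apply le_INR in H. inr. unfold A in *. lra. }
  destruct (Rlt_dec _ _) as [r|r].
  { exfalso. rewrite Hx in r. apply div_lt_iff in r; auto. lra. }
  destruct (Rle_dec _ _) as [r0|r0].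
  { exfalso. rewrite Hx in r0. apply div_le_iff in r0; auto. lra. }
  destruct (Rlt_dec _ _) as [r1|r1].
  { exfalso. rewrite Hx in r1. apply div_lt_iff in r1; auto. lra. }
  destruct (Rle_dec _ _) as [r2|r2].
  { rewrite Hx in r2. apply div_le_iff in r2; auto.
    assert (Ei : i = (2*(a-1))%nat).
    { apply INR_eq. assert (H: (2*(a-1) + 2 = 2*a)%nat) by lia.
      apply (f_equal INR) in H. inr. unfold A in *. lra. }
    rewrite Ei, pow_1_odd. rewrite Hx, Ei. inr. rewrite minus_INR by lia. fold A.
    simpl INR. field. lra. }
  assert (r3 : 2 * INR i < 4 * A - 4).
  { apply Rnot_le_lt in r2. rewrite Hx in r2. apply div_lt_iff in r2; auto. }
  assert (Hi3 : (2*i + 4 < 4*a)%nat).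
  { apply INR_lt. inr. unfold A in *. lra. }
  destruct (Nat.Even_or_Odd i) as [[p Hp]|[p Hp]].
  -
    destruct (excluded_middle_informative _) as [H|H].
    { exfalso. destruct H as [q [_ [Hq1 Hq2]]]. rewrite Hx in Hq1, Hq2.
      apply div_le_iff in Hq1; auto. apply div_lt_iff in Hq2; auto.
      rewrite Hp in Hq1, Hq2.
      assert (H1: (4*q+2 <= 2*(2*p))%nat) by (apply INR_le; inr; lra).
      assert (H2: (2*(2*p) < 4*q+4)%nat) by (apply INR_lt; inr; lra).
      lia. }
    destruct (excluded_middle_informative _) as [H'|H'].
    + destruct (constructive_indefinite_description _ H') as [q Hq].
      cbn [proj1_sig]. destruct Hq as [Hq0 [_ [Hq1 Hq2]]]. rewrite Hx in Hq1, Hq2.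
      apply div_le_iff in Hq1; auto. apply div_lt_iff in Hq2; auto.
      rewrite Hp in Hq1, Hq2.
      assert (H1: (4*q <= 2*(2*p))%nat) by (apply INR_le; inr; lra).
      assert (H2: (2*(2*p) < 4*q+2)%nat) by (apply INR_lt; inr; lra).
      assert (q = p) by lia. subst q. rewrite Hx, Hp, pow_1_odd. inr. field. lra.
    + exfalso. apply H'. exists p. unfold asc_piece. rewrite sqrt16. fold A M.
      split; [lia|]. split.
      * assert (H9: (p + 2 <= a)%nat) by lia. apply le_INR in H9. inr. unfold A in *. lra.
      * rewrite Hx, Hp. split; [apply div_le_iff|apply div_lt_iff]; auto; inr; lra.
  -
    destruct (excluded_middle_informative _) as [H|H].
    + destruct (constructive_indefinite_description _ H) as [q Hq].
      cbn [proj1_sig]. destruct Hq as [_ [Hq1 Hq2]]. rewrite Hx in Hq1, Hq2.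
      apply div_le_iff in Hq1; auto. apply div_lt_iff in Hq2; auto.
      rewrite Hp in Hq1, Hq2.
      assert (H1: (4*q+2 <= 2*(2*p+1))%nat) by (apply INR_le; inr; lra).
      assert (H2: (2*(2*p+1) < 4*q+4)%nat) by (apply INR_lt; inr; lra).
      assert (q = p) by lia. subst q.
      replace (S i) with (2*(S p))%nat by lia. rewrite pow_1_even.
      rewrite Hx, Hp. inr. field. lra.
    + exfalso. apply H. exists p. unfold desc_piece. rewrite sqrt16. fold A M.
      split.
      * assert (H0: (p + 2 <= a)%nat) by lia. apply le_INR in H0. inr. unfold A in *. lra.
      * rewrite Hx, Hp. split; [apply div_le_iff|apply div_lt_iff]; auto; inr; lra.
Qed.

Lemma Rdiv_le_0_compat x y : 0 <= x -> 0 < y -> 0 <= x / y.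
Proof. intros; unfold Rdiv; apply Rmult_le_pos; auto; left; apply Rinv_0_lt_compat; auto. Qed.

Lemma pow_h a : (-1)^(8*a*a) = 1.
Proof. replace (8*a*a)%nat with (2*(4*a*a))%nat by lia. apply pow_1_even. Qed.

Lemma pow_Sh a i : (-1)^(S (8*a*a) + i) = - (-1)^i.
Proof. rewrite pow_add. cbn [pow]. rewrite pow_h. ring. Qed.

Lemma node_second a i : (1 <= a)%nat ->
  node (16*a*a) (S (8*a*a) + i) = 2 * INR (S i) / INR (16*a*a).
Proof. intros Ha. unfold node. rewrite INR16. rewrite plus_INR, !S_INR, !mult_INR.
  assert (1 <= INR a) by (apply le_INR in Ha; simpl in Ha; lra).
  simpl INR. field. nra. Qed.

Lemma D_bounds a : (2 <= a)%nat ->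
  2/3 * INR (16*a*a) <= Dn (16*a*a) (1 / INR (16*a*a)) <= 2 * INR (16*a*a).
Proof.
  intros Ha. assert (HA : 2 <= INR a) by (apply le_INR in Ha; simpl in Ha; lra).
  assert (HM : INR (16*a*a) = 16 * INR a * INR a) by apply INR16.
  unfold Dn. rewrite (tech2 _ (8*a*a) (16*a*a)) by nia.
  set (M := INR (16*a*a)) in *.
  assert (HH : INR (8*a*a) = M/2) by (rewrite !mult_INR, HM; simpl; lra).
  rewrite (sum_eq _ (fun k => (-1)^k * (M / (M + 1 - 2 * INR k)))).
  2:{ intros k Hk. apply le_INR in Hk. rewrite HH in Hk. unfold node. fold M.
      field. split; nra. }
  rewrite (sum_eq _ (fun i => (-1)^i * (M / (2 * INR i + 1))) (16*a*a - S (8*a*a))%nat).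
  2:{ intros i _. rewrite pow_Sh. unfold node. fold M. rewrite plus_INR, S_INR, HH.
      pose proof (pos_INR i). field. split; nra. }
  pose proof (alt_inc (fun k => M / (M + 1 - 2 * INR k)) (8*a*a)) as H1.
  rewrite pow_h, HH in H1.
  replace (M / (M + 1 - 2 * (M/2))) with M in H1 by (field; nra).
  assert (H1' : 0 <= 1 * sum_f_R0 (fun k : nat => (-1) ^ k * (M / (M + 1 - 2 * INR k))) (8 * a * a) <= M).
  { apply H1.
    - intros k Hk. apply le_INR in Hk. rewrite HH, S_INR in Hk. rewrite S_INR.
      pose proof (pos_INR k).
      apply Rmult_le_compat_l; [nra|]. apply Rinv_le_contravar; nra.
    - simpl. apply Rdiv_le_0_compat; nra. }
  pose proof (alt_dec (fun i => M / (2 * INR i + 1)) (2/3*M) M (16*a*a - S (8*a*a))) as H2.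
  destruct H2 as [H2 _].
  - intros k. rewrite S_INR. pose proof (pos_INR k). split.
    + apply Rdiv_le_0_compat; nra.
    + apply Rmult_le_compat_l; [nra|]. apply Rinv_le_contravar; nra.
  - simpl. replace (M / (2*0+1)) with M by field. nra.
  - simpl. replace (M / (2*0+1)) with M by field. replace (M / (2*1+1)) with (M/3) by field. nra.
  - lra.
Qed.

Lemma N_bound a : (2 <= a)%nat ->
  Nn (16*a*a) (fm (16*a*a)) (1 / INR (16*a*a)) >= 1/2 * ln (2 * INR a - 1).
Proof.
  intros Ha. assert (HA : 2 <= INR a) by (apply le_INR in Ha; simpl in Ha; lra).
  assert (HM : INR (16*a*a) = 16 * INR a * INR a) by apply INR16.
  unfold Nn. rewrite (tech2 _ (8*a*a) (16*a*a)) by nia.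
  set (M := INR (16*a*a)) in *.
  assert (HH : INR (8*a*a) = M/2) by (rewrite !mult_INR, HM; simpl; lra).
  rewrite (sum_eq _ (fun _ => 0) (8*a*a)).
  2:{ intros k Hk. apply le_INR in Hk. rewrite HH in Hk.
      rewrite (fm_left a); auto.
      - unfold Rdiv; ring.
      - unfold node. fold M.
        assert (2 * INR k / M - 1 <= 0).
        { unfold Rdiv. assert (0 < /M) by (apply Rinv_0_lt_compat; nra).
          assert (2 * INR k * /M <= M * / M) by (apply Rmult_le_compat_r; lra).
          rewrite Rinv_r in H0 by nra. lra. }
        assert (0 < 1/M) by (apply Rdiv_lt_0_compat; nra). lra. }
  rewrite sum_cte, Rmult_0_l, Rplus_0_l.
  pose proof (harm (fun i => (-1) ^ (S (8*a*a) + i) * fm (16*a*a) (node (16*a*a) (S (8*a*a) + i)) /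
      (1 / M - node (16*a*a) (S (8*a*a) + i))) (2*a-2) (16*a*a - S (8*a*a))) as H.
  rewrite Nat.min_r in H by nia.
  rewrite minus_INR in H by lia. rewrite mult_INR in H. simpl (INR 2) in H.
  replace ((1+1) * INR a - (1+1) + 1) with (2 * INR a - 1) in H by ring.
  apply H.
  - intros l _ Hl. rewrite (fm_mid a (S l)); auto; try lia.
    2:{ apply node_second; lia. }
    rewrite node_second by lia. rewrite pow_Sh. fold M. cbn [pow].
    rewrite S_INR. pose proof (pos_INR l).
    replace (- (-1) ^ l * (-1 * (-1 * (-1) ^ l) / M) / (1 / M - 2 * (INR l + 1) / M))
      with ((-1)^l * (-1)^l / (2 * INR l + 1)) by (field; split; nra).
    rewrite pow_m1_sq. lra.
  - intros l _. destruct (Nat.lt_ge_cases l (2*a-2)) as [Hl|Hl].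
    + rewrite (fm_mid a (S l)); auto; try lia.
      2:{ apply node_second; lia. }
      rewrite node_second by lia. rewrite pow_Sh. fold M. cbn [pow].
      rewrite S_INR. pose proof (pos_INR l).
      replace (- (-1) ^ l * (-1 * (-1 * (-1) ^ l) / M) / (1 / M - 2 * (INR l + 1) / M))
        with ((-1)^l * (-1)^l / (2 * INR l + 1)) by (field; split; nra).
      rewrite pow_m1_sq. apply Rdiv_le_0_compat; lra.
    + rewrite (fm_right a (S l)); auto; try lia.
      2:{ apply node_second; lia. }
      unfold Rdiv. rewrite Rmult_0_r, Rmult_0_l. lra.
Qed.

Lemma main a : (2 <= a)%nat ->
  fm (16*a*a) (1 / INR (16*a*a)) = 0 /\
  B (16*a*a) (fm (16*a*a)) (1 / INR (16*a*a)) >= ln (INR (16*a*a)) / (16 * INR (16*a*a)).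
Proof.
  intros Ha. assert (HA : 2 <= INR a) by (apply le_INR in Ha; simpl in Ha; lra).
  assert (HM : INR (16*a*a) = 16 * INR a * INR a) by apply INR16.
  pose proof (N_bound a Ha) as HN. pose proof (D_bounds a Ha) as HD.
  set (M := INR (16*a*a)) in *. set (A := INR a) in *.
  assert (HM0 : 0 < M) by nra.
  split.
  - unfold fm. cbv zeta. rewrite sqrt16. fold M A.
    destruct (Rlt_dec _ _) as [r|r]; [lra|].
    destruct (Rle_dec _ _) as [r0|r0].
    { exfalso. apply div_le_iff in r0; auto. lra. }
    destruct (Rlt_dec _ _) as [r1|r1]; [lra|].
    exfalso. apply r1. apply div_lt_iff; auto; lra.
  - unfold B. destruct (excluded_middle_informative _) as [H|H].
    { exfalso. destruct H as [k [Hk Hx]]. unfold node in Hx. fold M in Hx.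
      assert (E : 2 * INR k = M + 1).
      { replace (2 * INR k) with ((2 * INR k / M) * M) by (field; lra).
        replace (2 * INR k / M) with (1/M + 1) by lra. field. lra. }
      assert (E' : (2 * k = 16*a*a + 1)%nat).
      { apply INR_eq. rewrite plus_INR, mult_INR. fold M. simpl (INR 2). simpl (INR 1). lra. }
      lia. }
    set (N := Nn _ _ _) in *. set (D := Dn _ _) in *.
    set (L := ln (2 * A - 1)) in *.
    assert (HL0 : 0 <= L).
    { unfold L. rewrite <- ln_1. apply ln_le'; lra. }
    assert (HlnM : ln M <= 4 * L).
    { unfold L. replace (4 * ln (2*A-1)) with (INR 4 * ln (2*A-1)) by (simpl; ring). rewrite <- ln_pow by lra. apply ln_le'; [lra|].
      rewrite HM. simpl. nra. }
    assert (HD0 : 0 < D) by lra.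
    apply Rle_ge.
    replace (ln M / (16 * M)) with ((ln M * D) / (16 * M * D)) by (field; lra).
    replace (N / D) with ((16 * M * N) / (16 * M * D)) by (field; lra).
    apply div_le_iff; [nra|].
    assert (ln M * D <= 4 * L * D) by (apply Rmult_le_compat_r; lra).
    nra.
Qed.

Lemma pow_shape j : (3 <= j)%nat -> exists a, (2 <= a)%nat /\ (2 ^ (2 ^ j) = 16 * a * a)%nat.
Proof.
  intros Hj. destruct j as [|j']; [lia|].
  assert (H4 : (2^2 <= 2^j')%nat) by (apply Nat.pow_le_mono_r; lia).
  change (2^2)%nat with 4%nat in H4.
  exists (2 ^ (2^j' - 2))%nat. split.
  - assert (H2 : (2^1 <= 2^(2^j' - 2))%nat) by (apply Nat.pow_le_mono_r; lia).
    change (2^1)%nat with 2%nat in H2. exact H2.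
  - rewrite Nat.pow_succ_r'.
    replace (2 * 2^j')%nat with (2^j' + 2^j')%nat by lia.
    rewrite Nat.pow_add_r.
    replace (2^j')%nat with (2 + (2^j' - 2))%nat at 1 2 by lia.
    rewrite Nat.pow_add_r. change (2^2)%nat with 4%nat. ring.
Qed.

Theorem lemma2 : forall j : nat, (100 <= j)%nat ->
  fm (2 ^ (2 ^ j)) (1 / INR (2 ^ (2 ^ j))) = 0 /\
  B (2 ^ (2 ^ j)) (fm (2 ^ (2 ^ j))) (1 / INR (2 ^ (2 ^ j)))
    >= ln (INR (2 ^ (2 ^ j))) / (16 * INR (2 ^ (2 ^ j))).
Proof.
  intros j Hj. destruct (pow_shape j ltac:(lia)) as [a [Ha E]].
  rewrite E. apply main. exact Ha.
Qed.
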